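(* Let $\mathcal{I},\mathcal{J}$ be ideals on $\omega$ with $\mathcal{J}\le_{\mathrm{KB}}\mathcal{I}$. If Player II has a winning strategy in the tallness game with respect to $\mathcal{J}$, then Player II has a winning strategy in the tallness game with respect to $\mathcal{I}$.
   Context: Ideals on $\omega$ are assumed to contain all finite sets. For ideals $\mathcal{J}$ on $X$ and $\mathcal{I}$ on $Y$, $\mathcal{J}\le_{\mathrm{KB}}\mathcal{I}$ means there is a finite-to-one function $f:Y\to X$ with $f^{-1}(J)\in\mathcal{I}$ for every $J\in\mathcal{J}$. For an ideal $\mathcal{I}$ on $\omega$, the tallness game with respect to $\mathcal{I}$: at round $k$, Player I plays $n_k\in\omega$ with $n_0<n_1<\cdots$ and then Player II plays $i_k\in\{0,1\}$. Player II wins iff $\{n_k: i_k=1\}$ is infinite and belongs to $\mathcal{I}$. *)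

(* Defs.v *)
From Stdlib Require Import List Arith.
Import ListNotations.

Definition finite_set (A : nat -> Prop) : Prop :=
  exists N, forall x, A x -> x < N.

Definition set_incl (A B : nat -> Prop) : Prop := forall x, A x -> B x.

Record is_ideal (I : (nat -> Prop) -> Prop) : Prop := {
  ideal_down : forall A B, set_incl A B -> I B -> I A;
  ideal_union : forall A B, I A -> I B -> I (fun x => A x \/ B x);
  ideal_fin : forall A, finite_set A -> I A;
  ideal_proper : ~ I (fun _ => True)
}.

Definition finite_to_one (f : nat -> nat) : Prop :=
  forall x, finite_set (fun y => f y = x).

Definition KB_le (J I : (nat -> Prop) -> Prop) : Prop :=
  exists f : nat -> nat, finite_to_one f /\
    forall A, J A -> I (fun y => A (f y)).

(* A play of Player I is a strictly increasing sequence
   n : nat -> nat.  A strategy of Player II maps the finite sequence of moves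
   of Player I so far [n_0; ...; n_k] to the answer i_k (true = 1). *)
Definition strictly_increasing (n : nat -> nat) : Prop :=
  forall k, n k < n (S k).

Definition prefix (n : nat -> nat) (k : nat) : list nat :=
  map n (seq 0 (S k)).

Definition selected (sigma : list nat -> bool) (n : nat -> nat) : nat -> Prop :=
  fun m => exists k, n k = m /\ sigma (prefix n k) = true.

Definition II_wins_play (I : (nat -> Prop) -> Prop) (sigma : list nat -> bool)
  (n : nat -> nat) : Prop :=
  ~ finite_set (selected sigma n) /\ I (selected sigma n).

Definition II_winning_strategy (I : (nat -> Prop) -> Prop)
  (sigma : list nat -> bool) : Prop :=
  forall n, strictly_increasing n -> II_wins_play I sigma n.

Definition II_has_winning_strategy (I : (nat -> Prop) -> Prop) : Prop :=
  exists sigma, II_winning_strategy I sigma.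

(* Main.v *)
Require Import Defs.
From Stdlib Require Import List Arith Lia ConstructiveEpsilon.
Import ListNotations.

Definition step2 (f : nat -> nat) (p : list nat * bool) (x : nat) : list nat * bool :=
  match fst p with
  | [] => ([f x], true)
  | a :: r => if last (a :: r) 0 <? f x then ((a :: r) ++ [f x], true) else (a :: r, false)
  end.

Definition simL f l := fold_left (step2 f) l ([], false).
Definition sig' f (sigma : list nat -> bool) l :=
  andb (snd (simL f l)) (sigma (fst (simL f l))).

Definition Sn f n k := simL f (prefix n k).
Definition LL f n k := fst (Sn f n k).
Definition ad f n k := snd (Sn f n k).

Lemma Sn_S f n k : Sn f n (S k) = step2 f (Sn f n k) (n (S k)).
Proof.
  unfold Sn, simL, prefix. rewrite (seq_S (S k) 0), map_app, fold_left_app. reflexivity.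
Qed.

Lemma step_cases f n k : LL f n k <> [] ->
  (LL f n (S k) = LL f n k /\ ad f n (S k) = false /\ f (n (S k)) <= last (LL f n k) 0) \/
  (LL f n (S k) = LL f n k ++ [f (n (S k))] /\ ad f n (S k) = true /\
     last (LL f n k) 0 < f (n (S k))).
Proof.
  unfold LL, ad. rewrite Sn_S. destruct (Sn f n k) as [ms b]. cbn [fst snd].
  intro H. destruct ms as [|a l]; [congruence|]. cbn [step2 fst snd].
  destruct (Nat.ltb_spec (last (a :: l) 0) (f (n (S k)))); cbn [fst snd]; auto.
Qed.

Lemma L_ne f n k : LL f n k <> [].
Proof.
  induction k. { unfold LL; simpl; discriminate. }
  destruct (step_cases f n k IHk) as [[-> _]|[-> _]]; auto.
  intro E; symmetry in E; revert E; apply app_cons_not_nil.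
Qed.

Lemma stepc f n k :
  (LL f n (S k) = LL f n k /\ ad f n (S k) = false /\ f (n (S k)) <= last (LL f n k) 0) \/
  (LL f n (S k) = LL f n k ++ [f (n (S k))] /\ ad f n (S k) = true /\
     last (LL f n k) 0 < f (n (S k))).
Proof. apply step_cases, L_ne. Qed.

Lemma last_add f n k : ad f n k = true -> last (LL f n k) 0 = f (n k).
Proof.
  destruct k. { reflexivity. }
  destruct (stepc f n k) as [[_ [H _]]|[-> _]]; intros; [congruence|].
  apply last_last.
Qed.

Lemma prefix_L f n k d : exists t, LL f n (d + k) = LL f n k ++ t.
Proof.
  induction d. { exists []. rewrite app_nil_r. reflexivity. }
  destruct IHd as [t Ht]. simpl.
  destruct (stepc f n (d + k)) as [[-> _]|[-> _]].
  - exists t; auto.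
  - exists (t ++ [f (n (S (d + k)))]). rewrite Ht, app_assoc. reflexivity.
Qed.

Lemma len_mono f n k k' : k <= k' -> length (LL f n k) <= length (LL f n k').
Proof.
  intros H. replace k' with ((k' - k) + k) by lia.
  destruct (prefix_L f n k (k' - k)) as [t ->]. rewrite length_app. lia.
Qed.

Lemma nth_last (l : list nat) d : l <> [] -> nth (pred (length l)) l d = last l d.
Proof.
  induction l as [|a l IH]; intros H; [congruence|].
  destruct l as [|b l]; [reflexivity|].
  change (nth (pred (length (b::l))) (b::l) d = last (b::l) d). apply IH; discriminate.
Qed.

Lemma sorted_L f n k i : S i < length (LL f n k) ->
  nth i (LL f n k) 0 < nth (S i) (LL f n k) 0.
Proof.
  induction k.
  - unfold LL; simpl; lia.
  - destruct (stepc f n k) as [[-> _]|[-> [_ Hlt]]]; auto.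
    rewrite length_app; simpl length. intros H.
    destruct (Nat.lt_ge_cases (S i) (length (LL f n k))).
    + rewrite !app_nth1 by lia. auto.
    + assert (S i = length (LL f n k)) by lia.
      rewrite app_nth1 by lia. rewrite app_nth2 by lia.
      replace (S i - length (LL f n k)) with 0 by lia. simpl.
      replace i with (pred (length (LL f n k))) by lia.
      rewrite nth_last by apply L_ne. auto.
Qed.

Lemma dich f n k j : (exists k0, k < k0 <= j + k /\ ad f n k0 = true) \/ LL f n (j + k) = LL f n k.
Proof.
  induction j. { right; reflexivity. }
  destruct IHj as [[k0 [H1 H2]]|H].
  - left; exists k0; split; [lia|auto].
  - simpl. destruct (stepc f n (j + k)) as [[-> _]|[_ [H2 _]]].
    + right; auto.
    + left; exists (S (j + k)); split; [lia|auto].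
Qed.

Lemma fin_below f : finite_to_one f -> forall a, exists N, forall y, f y <= a -> y < N.
Proof.
  intros Hf a. induction a.
  - destruct (Hf 0) as [N HN]. exists N. intros y Hy. apply HN. lia.
  - destruct IHa as [N1 H1]. destruct (Hf (S a)) as [N2 H2].
    exists (N1 + N2). intros y Hy.
    destruct (Nat.eq_dec (f y) (S a)) as [E|E].
    + specialize (H2 y E). lia.
    + specialize (H1 y ltac:(lia)). lia.
Qed.

Lemma n_ge n : strictly_increasing n -> forall k, k <= n k.
Proof. intros H k. induction k; [lia|]. specialize (H k). lia. Qed.

Lemma ev_add f n : finite_to_one f -> strictly_increasing n ->
  forall k, exists k', k < k' /\ ad f n k' = true.
Proof.
  intros Hf Hn k.
  destruct (fin_below f Hf (last (LL f n k) 0)) as [N HN].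
  assert (Hb : last (LL f n k) 0 < f (n (S (N + k)))).
  { destruct (Nat.lt_ge_cases (last (LL f n k) 0) (f (n (S (N + k))))); auto.
    specialize (HN _ H). pose proof (n_ge n Hn (S (N + k))). lia. }
  destruct (dich f n k N) as [[k0 [H1 H2]]|H].
  - exists k0; split; [lia|auto].
  - destruct (stepc f n (N + k)) as [[_ [_ H3]]|[_ [H3 _]]].
    + rewrite H in H3. lia.
    + exists (S (N + k)). split; [lia|auto].
Qed.

Lemma unbounded f n : finite_to_one f -> strictly_increasing n ->
  forall j, exists K, j < length (LL f n K).
Proof.
  intros Hf Hn j. induction j.
  - exists 0. unfold LL; simpl; lia.
  - destruct IHj as [K HK]. destruct (ev_add f n Hf Hn K) as [k' [H1 H2]].
    destruct k' as [|p]; [lia|].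
    exists (S p). destruct (stepc f n p) as [[_ [H3 _]]|[-> _]]; [congruence|].
    rewrite length_app; simpl length.
    pose proof (len_mono f n K p ltac:(lia)). lia.
Qed.

Lemma add_index f n k j : j < length (LL f n k) ->
  exists k0, ad f n k0 = true /\ length (LL f n k0) = S j.
Proof.
  revert j. induction k; intros j Hj.
  - exists 0. unfold LL in *; simpl in *. split; [reflexivity|lia].
  - destruct (stepc f n k) as [[E _]|[E [H2 _]]]; rewrite E in Hj; auto.
    rewrite length_app in Hj; simpl length in Hj.
    destruct (Nat.lt_ge_cases j (length (LL f n k))); auto.
    exists (S k). rewrite E, length_app. simpl. split; [auto|lia].
Qed.

Lemma compar f n k k' i : i < length (LL f n k) -> i < length (LL f n k') ->
  nth i (LL f n k) 0 = nth i (LL f n k') 0.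
Proof.
  intros H1 H2. destruct (Nat.le_ge_cases k k') as [H|H].
  - replace k' with ((k' - k) + k) in * by lia.
    destruct (prefix_L f n k (k' - k)) as [t Ht]. rewrite Ht, app_nth1; auto.
  - replace k with ((k - k') + k') in * by lia.
    destruct (prefix_L f n k' (k - k')) as [t Ht]. rewrite Ht, app_nth1; auto.
Qed.

Lemma map_seq_nth (m : nat -> nat) : forall l s,
  (forall i, i < length l -> m (s + i) = nth i l 0) -> map m (seq s (length l)) = l.
Proof.
  induction l as [|a l IH]; intros s H; [reflexivity|].
  simpl. f_equal.
  - specialize (H 0 ltac:(simpl; lia)). rewrite Nat.add_0_r in H. auto.
  - apply IH. intros i Hi. replace (S s + i) with (s + S i) by lia.
    apply (H (S i)). simpl; lia.
Qed.

Theorem mainTheorem12 (I J : (nat -> Prop) -> Prop) :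
  is_ideal I -> is_ideal J -> KB_le J I ->
  II_has_winning_strategy J -> II_has_winning_strategy I.
Proof.
  intros HI HJ [f [Hf HfJ]] [sigma Hsig].
  exists (sig' f sigma). intros n Hn.
  assert (HK : forall j, { K | j < length (LL f n K) }).
  { intro j. apply constructive_indefinite_ground_description_nat.
    - intro K. apply lt_dec.
    - apply unbounded; auto. }
  set (Kf := fun j => proj1_sig (HK j)).
  assert (HKf : forall j, j < length (LL f n (Kf j))) by (intro j; exact (proj2_sig (HK j))).
  set (m := fun j => nth j (LL f n (Kf j)) 0).
  assert (mchar : forall k i, i < length (LL f n k) -> m i = nth i (LL f n k) 0).
  { intros k i Hi. unfold m. apply compar; auto. }
  assert (Hm : strictly_increasing m).
  { intro i. rewrite (mchar (Kf (S i)) i) by (specialize (HKf (S i)); lia).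
    rewrite (mchar (Kf (S i)) (S i)) by auto. apply sorted_L; auto. }
  assert (pm : forall k, prefix m (pred (length (LL f n k))) = LL f n k).
  { intro k. unfold prefix.
    assert (E : S (pred (length (LL f n k))) = length (LL f n k)).
    { pose proof (L_ne f n k). destruct (LL f n k); [congruence|simpl; lia]. }
    rewrite E. apply map_seq_nth. intros i Hi. apply mchar; auto. }
  assert (mlast : forall k, m (pred (length (LL f n k))) = last (LL f n k) 0).
  { intro k. rewrite (mchar k) by (pose proof (L_ne f n k); destruct (LL f n k); [congruence|simpl; lia]).
    apply nth_last, L_ne. }
  destruct (Hsig m Hm) as [Ainf AJ].
  assert (Hsub : set_incl (selected (sig' f sigma) n)
                   (fun y => selected sigma m (f y))).
  { intros y [k [<- Hk]]. unfold sig' in Hk.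
    apply Bool.andb_true_iff in Hk. destruct Hk as [H1 H2].
    change (ad f n k = true) in H1. change (sigma (LL f n k) = true) in H2.
    exists (pred (length (LL f n k))). split.
    - rewrite mlast. apply last_add; auto.
    - rewrite pm. auto. }
  split.
  - intros [N HN]. apply Ainf.
    assert (Hb : forall N, exists M, forall y, y < N -> f y < M).
    { intro N0. induction N0. { exists 0; lia. }
      destruct IHN0 as [M HM]. exists (M + S (f N0)). intros y Hy.
      destruct (Nat.eq_dec y N0); [subst; lia|]. specialize (HM y ltac:(lia)). lia. }
    destruct (Hb N) as [M HM]. exists M.
    intros a [j [<- Hj]].
    destruct (add_index f n (Kf j) j (HKf j)) as [k0 [H1 H2]].
    assert (Pk : prefix m j = LL f n k0) by (rewrite <- pm, H2; reflexivity).
    assert (Sel : selected (sig' f sigma) n (n k0)).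
    { exists k0. split; auto. unfold sig'. apply Bool.andb_true_iff. split.
      - exact H1.
      - change (sigma (LL f n k0) = true). rewrite <- Pk. auto. }
    specialize (HN _ Sel).
    assert (m j = f (n k0)).
    { replace j with (pred (length (LL f n k0))) by (rewrite H2; reflexivity).
      rewrite mlast. apply last_add; auto. }
    rewrite H. apply HM. auto.
  - eapply (ideal_down _ HI); [exact Hsub|]. apply HfJ. exact AJ.
Qed.
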